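(* Let $k\leq n-2$ and $m\geq1$, or let $k=n-1$ and $m\geq2$. If $G$ is minor maximal amongst graphs with $n$ vertices, at most $m$ parallel edges between any given pair of vertices, and spectator floor $k$, then $G$ is an $m$-saturated crowded $(n-k)$-parade.
   Context: All graphs are finite, have at least one vertex, have no loops, and may have multiple (parallel) edges. A minor of $H$ is any graph obtained from $H$ by a sequence of: deleting an isolated vertex, deleting an edge, contracting an edge that has no edge parallel to it. A graph $G$ in a class $\mathcal{C}$ is minor maximal in $\mathcal{C}$ if no graph in $\mathcal{C}$ other than $G$ has $G$ as a minor. A unique shortest path is a shortest $u$–$v$ path $P$ such that every $u$–$v$ path with the same number of vertices is identical to $P$, where two paths with different edge sequences are different even if their vertex sequences agree; a single vertex is a unique shortest path. The parade number $\mathrm{usp}(G)$ is the largest number of vertices of a unique shortest path in $G$; a parade is a unique shortest path with $\mathrm{usp}(G)$ vertices. The spectator number is $\mathrm{sp}(G)=|V(G)|-\mathrm{usp}(G)$. The spectator floor $\lfloor \mathrm{sp}\rfloor(G)$ is the minimum of $\mathrm{sp}(H)$ over all graphs $H$ of which $G$ is a minor. For $p\geq2$, a crowded $p$-parade is a graph $G$ with a parade $P$ of $p$ vertices such that (i) every vertex outside $P$ is adjacent to exactly two vertices of $P$, and those two vertices are adjacent to each other; (ii) any two vertices outside $P$ that are adjacent to a common vertex of $P$ are adjacent to each other. An $m$-saturated crowded $p$-parade ($p\geq 2$) is a crowded $p$-parade in which every edge not in the parade has exactly $m$ parallel copies (including itself). A crowded $1$-parade is a graph whose simplification is complete; an $m$-saturated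 crowded $1$-parade is a graph in which every pair of vertices is joined by exactly $m$ edges. *)

(* Defs.v *)
From mathcomp Require Import all_boot.
From mathcomp Require Import boolp.

Set Implicit Arguments.
Unset Strict Implicit.
Unset Printing Implicit Defensive.

(* A finite loopless multigraph with at least one vertex, given up to
   isomorphism by its vertex set 'I_nv and the number of (parallel) edges
   between each pair of vertices.  The edges between a and b are the
   labelled edges (a,b,l) with l < mul a b  (labels are symmetric). *)
Record mgraph := MGraph {
  nv : nat;
  mul : 'I_nv -> 'I_nv -> nat;
  mul_sym : forall a b, mul a b = mul b a;
  mul_irr : forall a, mul a a = 0;
  nv_gt0 : 0 < nv }.

Definition adj (G : mgraph) (a b : 'I_(nv G)) : bool := 0 < mul a b.

Definition steps (G : mgraph) (vs : seq 'I_(nv G)) (ls : seq nat) :=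
  zip (zip vs (behead vs)) ls.

Definition is_path (G : mgraph) (vs : seq 'I_(nv G)) (ls : seq nat) : Prop :=
  [/\ vs != [::], uniq vs, size ls = (size vs).-1 &
      all (fun t => t.2 < mul t.1.1 t.1.2) (steps vs ls)].

Definition same_ends (G : mgraph) (vs vs' : seq 'I_(nv G)) : Prop :=
  ohead vs' = ohead vs /\ ohead (rev vs') = ohead (rev vs).

Definition is_usp (G : mgraph) (vs : seq 'I_(nv G)) (ls : seq nat) : Prop :=
  is_path vs ls /\
  forall vs' ls', is_path vs' ls' -> same_ends vs vs' ->
    size vs <= size vs' /\ (size vs' = size vs -> vs' = vs /\ ls' = ls).

Definition usp (G : mgraph) : nat :=
  \max_(p < (nv G).+1 | `[< exists vs ls, @is_usp G vs ls /\ size vs = p >]) p.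

Definition is_parade (G : mgraph) (vs : seq 'I_(nv G)) (ls : seq nat) : Prop :=
  is_usp vs ls /\ size vs = usp G.

Definition sp (G : mgraph) : nat := nv G - usp G.

Definition iso (H G : mgraph) : Prop :=
  exists f : 'I_(nv H) -> 'I_(nv G),
    bijective f /\ forall u w, mul (f u) (f w) = mul u w.

Definition del_edge (H G : mgraph) : Prop :=
  exists f : 'I_(nv H) -> 'I_(nv G), bijective f /\
  exists a b, 0 < mul a b /\
    forall u w, mul (f u) (f w) =
      mul u w - (((u == a) && (w == b)) || ((u == b) && (w == a))).

Definition del_isolated (H G : mgraph) : Prop :=
  exists x : 'I_(nv H), (forall y, mul x y = 0) /\
  exists f : 'I_(nv H) -> 'I_(nv G),
    (forall u w, u != x -> w != x -> f u = f w -> u = w) /\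
    (forall y, exists2 u, u != x & f u = y) /\
    (forall u w, u != x -> w != x -> mul (f u) (f w) = mul u w).

Definition contract (H G : mgraph) : Prop :=
  exists a b : 'I_(nv H), mul a b = 1 /\
  exists f : 'I_(nv H) -> 'I_(nv G),
    (forall y, exists u, f u = y) /\ f a = f b /\
    (forall u w, f u = f w -> [\/ u = w, u = a /\ w = b | u = b /\ w = a]) /\
    (forall x y, x != y ->
       mul x y = \sum_(u | f u == x) \sum_(w | f w == y) mul u w).

Definition minor_step (H G : mgraph) : Prop :=
  [\/ iso H G, del_edge H G, del_isolated H G | contract H G].

(* is_minor G H : G is a minor of H *)
Inductive is_minor (G : mgraph) : mgraph -> Prop :=
| minor_refl : is_minor G G
| minor_cons H H' : minor_step H H' -> is_minor G H' -> is_minor G H.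

Lemma spfloor_ex (G : mgraph) :
  exists s, (fun s => `[< exists H, is_minor G H /\ sp H = s >]) s.
Proof. exists (sp G); apply/asboolP; exists G; split=> //; exact: minor_refl. Qed.

Definition spfloor (G : mgraph) : nat := ex_minn (spfloor_ex G).

Definition minor_maximal (C : mgraph -> Prop) (G : mgraph) : Prop :=
  C G /\ forall H, C H -> is_minor G H -> iso H G.

Definition in_parade (G : mgraph) (vs : seq 'I_(nv G)) (ls : seq nat)
  (a b : 'I_(nv G)) (l : nat) : bool :=
  (((a, b), l) \in steps vs ls) || (((b, a), l) \in steps vs ls).

Definition sat_crowded_parade (G : mgraph) (m p : nat) : Prop :=
  (p = 1 /\ forall a b : 'I_(nv G), a != b -> mul a b = m) \/
  (2 <= p /\ exists (vs : seq 'I_(nv G)) ls, [/\ is_parade vs ls, size vs = p,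
     (forall v, v \notin vs ->
        #|[set x | (x \in vs) && adj v x]| = 2 /\
        forall x y, x \in vs -> y \in vs -> adj v x -> adj v y -> x != y ->
          adj x y),
     (forall u v x, u \notin vs -> v \notin vs -> u != v -> x \in vs ->
        adj u x -> adj v x -> adj u v) &
     (forall a b l, l < mul a b -> ~~ in_parade vs ls a b l -> mul a b = m)]).

Definition the_class (n m k : nat) (G : mgraph) : Prop :=
  [/\ nv G = n, (forall a b : 'I_(nv G), mul a b <= m) & spfloor G = k].

(* Main.v *)
Require Import Defs.
From mathcomp Require Import all_boot.
From mathcomp Require Import boolp zify.
Import Defs.
Set Implicit Arguments. Unset Strict Implicit. Unset Printing Implicit Defensive.

Lemma minor_trans A B C : is_minor A B -> is_minor B C -> is_minor A C.
Proof. move=> hAB; elim=> [|H H' st _ IH] //; exact: (minor_cons st IH). Qed.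

Lemma surj_card (T T' : finType) (f : T -> T') :
  (forall y, exists u, f u = y) -> #|T'| <= #|T|.
Proof.
move=> hs.
have hg : forall y, {u | f u == y}.
  move=> y; case: (pickP (fun u => f u == y)) => [u hu|h0]; first by exists u.
  exfalso; case: (hs y) => u hu; by move: (h0 u); rewrite hu eqxx.
pose g y := sval (hg y).
have gK : cancel g f by move=> y; rewrite /g; case: (hg y) => u /= /eqP.
exact: leq_card (can_inj gK).
Qed.

Lemma step_nv H H' : minor_step H H' -> nv H' <= nv H.
Proof.
case.
- case=> f [fb _]; rewrite -[nv H]card_ord -[nv H']card_ord (bij_eq_card fb) //.
- case=> f [fb _]; rewrite -[nv H]card_ord -[nv H']card_ord (bij_eq_card fb) //.
- case=> x [_ [f [_ [hs _]]]]; rewrite -[nv H]card_ord -[nv H']card_ord.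
  apply: surj_card => y; case: (hs y) => u _ <-; by exists u.
- case=> a [b [_ [f [hs _]]]]; rewrite -[nv H]card_ord -[nv H']card_ord.
  exact: surj_card.
Qed.

Lemma minor_nv G H : is_minor G H -> nv G <= nv H.
Proof. elim=> // H1 H2 st _ IH; exact: leq_trans IH (step_nv st). Qed.

Lemma spfloor_le G H : is_minor G H -> spfloor G <= sp H.
Proof.
move=> hm; rewrite /spfloor; case: ex_minnP => s _ hmin; apply: hmin.
by apply/asboolP; exists H.
Qed.

Lemma spfloor_spec G : exists H, is_minor G H /\ sp H = spfloor G.
Proof.
rewrite /spfloor; case: ex_minnP => s hs _; by move/asboolP: hs.
Qed.

Lemma usp_le G : usp G <= nv G.
Proof. rewrite /usp; apply/bigmax_leqP => i _; by rewrite -ltnS. Qed.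

Lemma path_size G vs ls : @is_path G vs ls -> size vs <= nv G.
Proof.
case=> _ u _ _; rewrite -[X in _ <= X](size_enum_ord (nv G)).
apply: uniq_leq_size => //= x _; by rewrite mem_enum.
Qed.

Lemma usp_ge G vs ls : @is_usp G vs ls -> size vs <= usp G.
Proof.
move=> hu; have hs := path_size hu.1.
rewrite /usp; have hlt : size vs < (nv G).+1 by [].
apply: (@leq_trans (Ordinal hlt)) => //; apply: (leq_bigmax_cond (Ordinal hlt)).
by apply/asboolP; exists vs, ls.
Qed.

Lemma single_usp G (v : 'I_(nv G)) : is_usp [:: v] [::].
Proof.
split; first by split.
move=> vs' ls' [hne hu hsz _] [h1 h2]; split.
  by case: vs' hne {hu hsz h1 h2}.
case: vs' hne hu hsz h1 h2 => // x [|y s] //= _ _ hsz [->] _ _.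
by case: ls' hsz.
Qed.

Lemma usp_attained G : exists vs ls, @is_usp G vs ls /\ size vs = usp G.
Proof.
pose A := fun p : 'I_(nv G).+1 => `[< exists vs ls, @is_usp G vs ls /\ size vs = p >].
have hv : 'I_(nv G) by exists 0; exact: nv_gt0.
have hA : 0 < #|A|.
  have h1 : 1 < (nv G).+1 by rewrite ltnS nv_gt0.
  apply/card_gt0P; exists (Ordinal h1); rewrite /A /=.
  by apply/asboolP; exists [:: hv], [::]; split => //; exact: single_usp.
case: (eq_bigmax_cond (fun p : 'I_(nv G).+1 => val p) hA) => p hp.
rewrite /usp => ->; by move/asboolP: hp.
Qed.

Lemma sum_lt (T : finType) (F G : T -> nat) j :
  (forall i, F i <= G i) -> F j < G j -> \sum_i F i < \sum_i G i.
Proof.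
move=> hle hj; rewrite (bigD1 j) //= [X in _ < X](bigD1 j) //=.
rewrite -addSn leq_add //; exact: leq_sum.
Qed.

Lemma sum_eq_pt (T : finType) (F G : T -> nat) :
  (forall i, F i <= G i) -> \sum_i F i = \sum_i G i -> forall i, F i = G i.
Proof.
move=> hle hs i; apply/eqP; rewrite eqn_leq hle /=; rewrite leqNgt; apply/negP => hlt.
by move: (sum_lt hle hlt); rewrite hs ltnn.
Qed.

Lemma sum2_lt (T : finType) (F G : T -> T -> nat) a b :
  (forall i j, F i j <= G i j) -> F a b < G a b ->
  \sum_i \sum_j F i j < \sum_i \sum_j G i j.
Proof.
move=> hle hab; apply: (@sum_lt _ _ _ a) => [i|]; first by apply: leq_sum => j _.
exact: sum_lt hab.
Qed.

Lemma mgraph_eq N (M1 M2 : 'I_N -> 'I_N -> nat) s1 i1 s2 i2 p1 p2 :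
  M1 = M2 -> @MGraph N M1 s1 i1 p1 = @MGraph N M2 s2 i2 p2.
Proof.
move=> e; subst M2.
by rewrite (Prop_irrelevance s1 s2) (Prop_irrelevance i1 i2) (Prop_irrelevance p1 p2).
Qed.

Lemma del_chain N (M1 M2 : 'I_N -> 'I_N -> nat) s1 i1 s2 i2 p :
  (forall u w, M2 u w <= M1 u w) ->
  is_minor (@MGraph N M2 s2 i2 p) (@MGraph N M1 s1 i1 p).
Proof.
move eS : (\sum_u \sum_w M1 u w) => S.
elim: S {-2}S (leqnn S) M1 s1 i1 eS => [|S IH] S0 hS0 M1 s1 i1 eS hle.
  have e : M2 = M1.
    apply: functional_extensionality_dep => u; apply: functional_extensionality_dep => w.
    have h0 : forall x, \sum_w M2 x w <= \sum_w M1 x w by move=> x; apply: leq_sum => y _.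
    have h1 := @sum_eq_pt _ (fun x => \sum_w M2 x w) (fun x => \sum_w M1 x w) h0.
    apply: (@sum_eq_pt _ (M2 u) (M1 u)) => //; apply: h1.
    apply/eqP; rewrite eqn_leq; apply/andP; split; first by apply: leq_sum => x _.
    by rewrite eS; move: hS0; rewrite leqn0 => /eqP ->.
  subst M1; rewrite (mgraph_eq s1 i1 s2 i2 p p (erefl _)); exact: minor_refl.
case: (boolP [exists a, exists b, M2 a b < M1 a b]) => [/existsP[a /existsP[b hab]]|hno].
  pose c u w := (((u == a) && (w == b)) || ((u == b) && (w == a))) : nat.
  pose M1' u w := M1 u w - c u w.
  have s1' : forall u w, M1' u w = M1' w u.
    by move=> u w; rewrite /M1' /c (s1 u w) orbC (andbC (w==a)) (andbC (w==b)).
  have i1' : forall u, M1' u u = 0 by move=> u; rewrite /M1' i1.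
  have hab0 : 0 < M1 a b by apply: leq_ltn_trans hab.
  apply: (@minor_cons _ _ (@MGraph N M1' s1' i1' p)).
    apply: Or42; exists id; split; first by exists id.
    by exists a, b; split.
  have hne : a != b by apply/eqP => e; subst b; move: hab0; rewrite i1.
  apply: (IH (\sum_u \sum_w M1' u w)) => //.
    rewrite -ltnS; apply: leq_trans hS0; rewrite -eS.
    apply: (@sum2_lt _ _ _ a b) => [u w|]; first by rewrite /M1' leq_subr.
    by rewrite /M1' /c !eqxx /=; lia.
  move=> u w; rewrite /M1' /c.
  case: (boolP ((u == a) && (w == b))) => [/andP[/eqP -> /eqP ->]|h1] /=.
    by move: hab; lia.
  case: (boolP ((u == b) && (w == a))) => [/andP[/eqP -> /eqP ->]|h2] /=.
    by move: hab; rewrite s1 (s2 a b); lia.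
  by rewrite subn0.
have e : M2 = M1.
  apply: functional_extensionality_dep => u; apply: functional_extensionality_dep => w.
  apply/eqP; rewrite eqn_leq hle /= leqNgt; apply/negP => h.
  by move: hno; rewrite negb_exists => /forallP /(_ u); rewrite negb_exists => /forallP /(_ w); rewrite h.
subst M1; rewrite (mgraph_eq s1 i1 s2 i2 p p (erefl _)); exact: minor_refl.
Qed.

Definition dist (a b : nat) := (a - b) + (b - a).
Definition lvl_ok (p t : nat) := if odd t then t + 3 <= 2 * p else t + 2 <= 2 * p.
Definition rmv (p r t : nat) : nat :=
  if ~~ odd t && (t != 2 * r) then (if t < 2 * r then t else t - 2)
  else 2 * minn (if t < 2 * r then t./2 else t./2 - 1) (p - 3) + 1.

Lemma parity t : {q | t = 2 * q /\ odd t = false} + {q | t = 2 * q + 1 /\ odd t = true}.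
Proof.
case h: (odd t); [right|left]; exists t./2; split => //;
  move: (odd_double_half t); rewrite h /=; lia.
Qed.

Ltac par t := let q := fresh "q" in let e1 := fresh "e" in let e2 := fresh "o" in
  case: (parity t) => [[q [e1 e2]]|[q [e1 e2]]]; rewrite ?e2; subst t.

Ltac crush := rewrite /dist /lvl_ok /rmv /= in *;
  repeat (case: ifP => /=; rewrite ?oddD ?oddM /= => ?); lia.

Lemma odd2 q : odd (2 * q) = false. Proof. by rewrite oddM. Qed.
Lemma odd21 q : odd (2 * q + 1) = true. Proof. by rewrite oddD oddM. Qed.

Lemma half2 q : (2 * q)./2 = q. Proof. by rewrite mul2n doubleK. Qed.
Lemma half21 q : (2 * q + 1)./2 = q.
Proof. by rewrite mul2n addn1 -[(q.*2).+1]/(odd true + q.*2) half_bit_double. Qed.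

Lemma sub2 q : 2 * q - 2 = 2 * (q - 1). Proof. lia. Qed.

Ltac splitc := repeat first [progress rewrite ?sub2 ?odd2 ?odd21 ?half2 ?half21 |
  match goal with |- context [if ?b then _ else _] =>
    lazymatch b with context [if _ then _ else _] => fail | _ =>
    let E := fresh "E" in case E: b end end].

Lemma rmv_lip p r t t' : 3 <= p -> r < p -> lvl_ok p t -> lvl_ok p t' ->
  dist t t' <= 2 -> dist (rmv p r t) (rmv p r t') <= 2.
Proof.
move=> hp hr; par t; par t'; rewrite /dist /lvl_ok /rmv ?odd2 ?odd21 ?half2 ?half21 /=; 
  repeat (case: ifP => /= ?); lia.
Qed.

Lemma rmv_ok p r t : 3 <= p -> r < p -> lvl_ok p t -> lvl_ok (p - 1) (rmv p r t).
Proof. move=> hp hr; par t; rewrite /lvl_ok /rmv; splitc; lia. Qed.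

Lemma rmv_odd p r t : odd (rmv p r t) = ~~ (~~ odd t && (t != 2 * r)).
Proof. par t; rewrite /rmv; splitc; rewrite ?E //; lia. Qed.

Lemma rmv_inj p r t t' : ~~ odd t -> t != 2 * r -> ~~ odd t' -> t' != 2 * r ->
  rmv p r t = rmv p r t' -> t = t'.
Proof.
par t; par t'; rewrite ?odd2 ?odd21 //= => _ n1 _ n2; rewrite /rmv odd2 /= n1 n2 /=; splitc; lia.
Qed.

Lemma rmv_surj p r i : i < p - 1 -> r < p ->
  [/\ i + (r <= i) < p, 2 * (i + (r <= i)) != 2 * r & rmv p r (2 * (i + (r <= i))) = 2 * i].
Proof.
move=> hi hr; case: (leqP r i) => h /=.
- split; try lia. rewrite /rmv odd2 /=; splitc; lia.
- split; try lia. rewrite /rmv addn0 odd2 /=; splitc; lia.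
Qed.

Lemma rmv_pp p r t : 1 <= r -> r < p -> 3 <= p -> lvl_ok p t -> dist t (2 * r) <= 2 ->
  dist (rmv p r (2 * r - 2)) (rmv p r t) <= 2.
Proof.
move=> h1 h2 h3; rewrite sub2; par t; rewrite /lvl_ok /dist /rmv; splitc; lia.
Qed.

Lemma rmv_sp p r s : odd s -> dist s (2 * r) <= 1 -> rmv p r s = rmv p r (2 * r).
Proof.
par s => //= _; rewrite /dist /rmv odd21 odd2 /=; splitc; lia.
Qed.

Lemma rmv_ss p r a : odd a -> a + 1 = 2 * r ->
  rmv p r a = rmv p r (2 * r) /\ rmv p r (a + 2) = rmv p r (2 * r).
Proof.
par a => //= _ h; have -> : 2 * q + 1 + 2 = 2 * (q + 1) + 1 by lia.
rewrite /rmv odd21 odd2 /=; splitc; split; lia.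
Qed.

Definition InvP (k : nat) (X : mgraph) (lam : 'I_(nv X) -> nat) (p : nat) :=
  [/\ forall u w, 0 < mul u w -> dist (lam u) (lam w) <= 2,
      forall u w, ~~ odd (lam u) -> ~~ odd (lam w) -> mul u w <= 1,
      forall u w, ~~ odd (lam u) -> lam u = lam w -> u = w,
      forall u, lvl_ok p (lam u) &
      (forall i, i < p -> exists u, lam u = 2 * i) /\ nv X <= p + k].

Definition Inv k X := exists lam p, @InvP k X lam p.

Lemma transfer k X Y lam p p' (h : 'I_(nv Y) -> 'I_(nv X)) (g : nat -> nat) :
  @InvP k X lam p -> injective h ->
  (forall y y', 0 < mul y y' -> dist (g (lam (h y))) (g (lam (h y'))) <= 2) ->
  (forall y y', ~~ odd (g (lam (h y))) -> ~~ odd (g (lam (h y'))) -> mul y y' <= 1) ->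
  (forall t, lvl_ok p t -> lvl_ok p' (g t)) ->
  (forall t t', lvl_ok p t -> lvl_ok p t' -> ~~ odd (g t) -> g t = g t' -> t = t' /\ ~~ odd t) ->
  (forall i, i < p' -> exists y, g (lam (h y)) = 2 * i) ->
  nv Y <= p' + k -> Inv k Y.
Proof.
move=> [c1 c2 c3 c4 [c5 c6]] hi t1 t2 t3 t4 t5 t6.
exists (fun y => g (lam (h y))), p'; split => //.
- move=> y y' ho he; case: (t4 _ _ (c4 _) (c4 _) ho he) => e1 e2.
  by apply: hi; apply: c3.
by move=> y; apply: t3.
Qed.

Lemma card_miss (T T' : finType) (h : T -> T') (o : T') :
  injective h -> (forall y, h y != o) -> #|T| < #|T'|.
Proof.
move=> hi ho; rewrite -cardsT -(card_imset _ hi).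
have hs : h @: [set: T] \subset [set~ o].
  apply/subsetP => x /imsetP [y _ ->]; by rewrite !inE ho.
apply: (leq_ltn_trans (subset_leq_card hs)); rewrite cardsC1.
have : 0 < #|T'| by apply/card_gt0P; exists o.
lia.
Qed.

Lemma step_bij k X Y (f : 'I_(nv X) -> 'I_(nv Y)) :
  bijective f -> (forall u w, mul (f u) (f w) <= mul u w) -> Inv k X -> Inv k Y.
Proof.
move=> [fi fK fiK] hm [lam [p hP]].
have hP' := hP; case: hP' => c1 c2 c3 c4 [c5 c6].
have hmul : forall y y', mul y y' <= mul (fi y) (fi y').
  by move=> y y'; move: (hm (fi y) (fi y')); rewrite !fiK.
apply: (@transfer k X Y lam p p fi id hP).
- exact: can_inj fiK.
- move=> y y' h; apply: c1; exact: leq_trans h (hmul _ _).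
- move=> y y' o1 o2; exact: leq_trans (hmul _ _) (c2 _ _ o1 o2).
- by [].
- by move=> t t' _ _ ho he; split.
- move=> i /c5 [u hu]; exists (f u); by rewrite /= fK.
- apply: leq_trans c6; rewrite -[nv Y]card_ord -[nv X]card_ord.
  exact: leq_card (can_inj fiK).
Qed.

Lemma even_ex t : odd t = false -> exists r, t = 2 * r.
Proof. case: (parity t) => [[q [e _]]|[q [_ o]]]; [by exists q | by rewrite o]. Qed.

Lemma step_deliso k X Y : del_isolated X Y -> k + 2 <= nv Y -> Inv k X -> Inv k Y.
Proof.
case=> x [hx [f [finj [fsurj fmul]]]] hnv [lam [p hP]].
have hP' := hP; case: hP' => c1 c2 c3 c4 [c5 c6].
pose h y := odflt x [pick u | (u != x) && (f u == y)].
have hspec : forall y, h y != x /\ f (h y) = y.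
  move=> y; rewrite /h; case: pickP => [u /andP[hu /eqP hf]|h0] //=.
  exfalso; case: (fsurj y) => u hu hf; move: (h0 u); by rewrite hu hf eqxx.
have hinj : injective h by move=> y y' e; rewrite -(hspec y).2 -(hspec y').2 e.
have hback : forall u, u != x -> h (f u) = u.
  move=> u hu; apply: finj => //; [exact (hspec _).1 | exact (hspec _).2].
have hlt : nv Y < nv X.
  rewrite -[nv Y]card_ord -[nv X]card_ord; apply: (card_miss hinj) => y; exact (hspec y).1.
have hmY : forall y y', mul y y' = mul (h y) (h y').
  move=> y y'; rewrite -{1}(hspec y).2 -{1}(hspec y').2; apply: fmul; exact (hspec _).1.
case ho: (odd (lam x)).
- apply: (@transfer k X Y lam p p h id hP).
  + exact: hinj.
  + move=> y y'; rewrite hmY; exact: c1.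
  + move=> y y' o1 o2; rewrite hmY; exact: c2.
  + by [].
  + by move=> t t' _ _ o e; split.
  + move=> i /c5 [u hu]; exists (f u); rewrite hback //=.
    apply/eqP => e; subst u; by move: ho; rewrite hu odd2.
  + lia.
- case: (even_ex ho) => r hr.
  have hrp : r < p by move: (c4 x); rewrite /lvl_ok ho hr; lia.
  have hp3 : 3 <= p by lia.
  apply: (@transfer k X Y lam p (p - 1) h (rmv p r) hP).
  + exact: hinj.
  + move=> y y'; rewrite hmY => /c1; apply: rmv_lip => //; apply c4.
  + move=> y y'; rewrite !rmv_odd !negbK => /andP[o1 _] /andP[o2 _]; rewrite hmY; exact: c2.
  + move=> t ht; exact: rmv_ok.
  + move=> t t' _ _; rewrite rmv_odd negbK => /andP[o1 n1] e.
    have : ~~ odd (rmv p r t') by rewrite -e rmv_odd negbK o1 n1.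
    rewrite rmv_odd negbK => /andP[o2 n2]; split => //; exact: rmv_inj e.
  + move=> i hi; case: (rmv_surj hi hrp) => hj hne he; case: (c5 _ hj) => u hu.
    exists (f u); rewrite hback ?hu //.
    apply/eqP => e; subst u; by move: hne; rewrite -hu hr eqxx.
  + lia.
Qed.

Lemma distC a b : dist a b = dist b a. Proof. by rewrite /dist addnC. Qed.

Lemma sum_pos (T : finType) (P : pred T) (F : T -> nat) :
  0 < \sum_(i | P i) F i -> exists i, P i /\ 0 < F i.
Proof.
move=> h; case: (pickP (fun i => P i && (0 < F i))) => [i /andP[]|h0]; first by exists i.
exfalso; move: h; rewrite big1 // => i Pi; move: (h0 i); rewrite Pi /= lt0n => /negbT.
by rewrite negbK => /eqP.
Qed.

Lemma step_contract_gen k X Y (f : 'I_(nv X) -> 'I_(nv Y)) (c o : 'I_(nv X)) lam p p' g :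
  InvP k lam p -> c != o ->
  (forall y, exists u, f u = y) -> f c = f o ->
  (forall u w, f u = f w -> [\/ u = w, u = c /\ w = o | u = o /\ w = c]) ->
  (forall x y, x != y -> mul x y = \sum_(u | f u == x) \sum_(w | f w == y) mul u w) ->
  (forall t t', lvl_ok p t -> lvl_ok p t' -> dist t t' <= 2 -> dist (g t) (g t') <= 2) ->
  (forall t, lvl_ok p t -> dist (lam o) t <= 2 -> dist (g (lam c)) (g t) <= 2) ->
  (forall t, lvl_ok p t -> lvl_ok p' (g t)) ->
  (forall t t', lvl_ok p t -> lvl_ok p t' -> ~~ odd (g t) -> g t = g t' -> t = t' /\ ~~ odd t) ->
  (forall i, i < p' -> exists j, [/\ j < p, g (2 * j) = 2 * i & 2 * j != lam o]) ->
  (forall w, w != c -> w != o -> ~~ odd (g (lam c)) -> ~~ odd (g (lam w)) -> mul c w + mul o w <= 1) ->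
  p <= p' + 1 ->
  Inv k Y.
Proof.
move=> hP hco fsurj fco ffib fmul G1 G2 G3 G4 G5 G6 G7.
have hP' := hP; case: hP' => c1 c2 c3 c4 [c5 c6].
pose h y := if y == f c then c else odflt c [pick u | f u == y].
have H1 : forall y, f (h y) = y.
  move=> y; rewrite /h; case: eqP => [->//|_]; case: pickP => [u /eqP //|h0].
  exfalso; case: (fsurj y) => u hu; move: (h0 u); by rewrite hu eqxx.
have H2 : forall u, u != o -> h (f u) = u.
  move=> u hu; rewrite /h; case: eqP => [e|ne].
    by case: (ffib _ _ e) => [->|[-> _]|[e1 _]] //; move: hu; rewrite e1 eqxx.
  case: pickP => [v /eqP e|h0] /=; last by move: (h0 u); rewrite eqxx.
  case: (ffib _ _ e) => [//|[_ e2]|[_ e2]]; [by move: hu; rewrite e2 eqxx|by move: ne; rewrite e2].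
have H3 : forall y, h y != o.
  move=> y; rewrite /h; case: ifP => [_|/eqP ne] //.
  case: pickP => [v /eqP ev|_] //=.
  by apply/eqP => e; apply: ne; rewrite -ev e -fco.
have hinj : injective h by move=> y y' e; rewrite -(H1 y) -(H1 y') e.
have hlt : nv Y < nv X.
  rewrite -[nv Y]card_ord -[nv X]card_ord; exact: (card_miss hinj).
have hhc : h (f c) = c by rewrite /h eqxx.
have S2 : forall (F : 'I_(nv X) -> nat) y, y != f c -> \sum_(u | f u == y) F u = F (h y).
  move=> F y hy; apply: big_pred1 => u /=; apply/eqP/eqP => [e|->]; last exact: H1.
  subst y; rewrite H2 //; apply/eqP => e; subst u; by move: hy; rewrite fco eqxx.
have S3 : forall (F : 'I_(nv X) -> nat), \sum_(u | f u == f c) F u = F c + F o.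
  move=> F; rewrite (bigD1 c) //=; congr (_ + _); apply: big_pred1 => u /=.
  apply/andP/eqP => [[/eqP e ne]|->]; last by rewrite -fco eqxx eq_sym.
  by case: (ffib _ _ e) => [e1|[e1 _]|[e1 _]]; [move: ne; rewrite e1 eqxx|move: ne; rewrite e1 eqxx|].
have hodd : forall t, lvl_ok p t -> ~~ odd (g t) -> ~~ odd t.
  by move=> t ht ho; case: (G4 t t ht ht ho erefl).
apply: (@transfer k X Y lam p p' h g hP hinj).
- move=> y y' hm.
  have hne : y != y' by apply/eqP => e; subst y'; move: hm; rewrite mul_irr.
  move: hm; rewrite (fmul _ _ hne) => /sum_pos [u [/eqP fu /sum_pos [w [/eqP fw hw]]]].
  case: (eqVneq u o) => [eu|nu].
    subst u; have nw : w != o by apply/eqP => e; subst; move: hne; rewrite eqxx.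
    rewrite -fu -fw -fco hhc H2 //; apply: G2 => //; exact: c1.
  case: (eqVneq w o) => [ew|nw].
    subst w; rewrite -fu -fw -fco hhc H2 // distC; apply: G2 => //; rewrite distC; exact: c1.
  rewrite -fu -fw !H2 //; apply: G1 => //; exact: c1.
- move=> y y' o1 o2.
  case: (eqVneq y y') => [<-|hne]; first by rewrite mul_irr.
  rewrite (fmul _ _ hne).
  case: (eqVneq y (f c)) => [ey|ny].
    subst y; have ny' : y' != f c by rewrite eq_sym.
    rewrite S3 !S2 //; apply: G6.
    + by apply/eqP => e; move: ny'; rewrite -e H1 eqxx.
    + exact: H3.
    + by move: o1; rewrite hhc.
    + exact: o2.
  case: (eqVneq y' (f c)) => [ey'|ny'].
    subst y'; rewrite S2 // S3 (mul_sym _ c) (mul_sym _ o); apply: G6.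
    + by apply/eqP => e; move: ny; rewrite -e H1 eqxx.
    + exact: H3.
    + by move: o2; rewrite hhc.
    + exact: o1.
  rewrite S2 // S2 //; apply: c2; apply: hodd => //; exact: c4.
- exact: G3.
- exact: G4.
- move=> i /G5 [j [hj hg hne]]; case: (c5 _ hj) => u hu.
  exists (f u); rewrite H2 ?hu //; apply/eqP => e; subst u; by move: hne; rewrite hu eqxx.
- lia.
Qed.

Lemma rmv_G4 p r t t' : ~~ odd (rmv p r t) -> rmv p r t = rmv p r t' -> t = t' /\ ~~ odd t.
Proof.
rewrite rmv_odd negbK => /andP[o1 n1] e.
have : ~~ odd (rmv p r t') by rewrite -e rmv_odd negbK o1 n1.
rewrite rmv_odd negbK => /andP[o2 n2]; split => //; exact: rmv_inj e.
Qed.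

Lemma contract_lt X Y (f : 'I_(nv X) -> 'I_(nv Y)) a b :
  a != b -> (forall y, exists u, f u = y) -> f a = f b -> nv Y < nv X.
Proof.
move=> hne fsurj fab.
pose h y := odflt a [pick u | (u != b) && (f u == y)].
have hspec : forall y, h y != b /\ f (h y) = y.
  move=> y; rewrite /h; case: pickP => [u /andP[hu /eqP hf]|h0] //=.
  exfalso; case: (fsurj y) => u hu; case: (eqVneq u b) => [e|ne].
    subst u; move: (h0 a); by rewrite hne fab hu eqxx.
  by move: (h0 u); rewrite ne hu eqxx.
have hinj : injective h by move=> y y' e; rewrite -(hspec y).2 -(hspec y').2 e.
rewrite -[nv Y]card_ord -[nv X]card_ord; apply: (card_miss hinj) => y; exact (hspec y).1.
Qed.

Section Contr.
Variables (k : nat) (X Y : mgraph) (f : 'I_(nv X) -> 'I_(nv Y)) (c o : 'I_(nv X)).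
Variables (lam : 'I_(nv X) -> nat) (p : nat).
Hypothesis hP : InvP k lam p.
Hypothesis hco : c != o.
Hypothesis fsurj : forall y, exists u, f u = y.
Hypothesis fco : f c = f o.
Hypothesis ffib : forall u w, f u = f w -> [\/ u = w, u = c /\ w = o | u = o /\ w = c].
Hypothesis fmul : forall x y, x != y -> mul x y = \sum_(u | f u == x) \sum_(w | f w == y) mul u w.
Hypothesis hnv : k + 2 <= nv Y.

Let hlt : nv Y < nv X := contract_lt hco fsurj fco.

Lemma case_rmv r (G2 : forall t, lvl_ok p t -> dist (lam o) t <= 2 -> dist (rmv p r (lam c)) (rmv p r t) <= 2)
  (G6 : forall w, w != c -> w != o -> ~~ odd (rmv p r (lam c)) -> ~~ odd (rmv p r (lam w)) -> mul c w + mul o w <= 1)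
  (G5 : forall j, 2 * j != 2 * r -> 2 * j != lam o) :
  r < p -> Inv k Y.
Proof.
move=> hr; have hP' := hP; case: hP' => c1 c2 c3 c4 [c5 c6].
have hp3 : 3 <= p by move: hlt; lia.
apply: (@step_contract_gen k X Y f c o lam p (p - 1) (rmv p r) hP hco fsurj fco ffib fmul).
- move=> t t' h1 h2 h3; exact: rmv_lip.
- exact: G2.
- move=> t ht; exact: rmv_ok.
- move=> t t' _ _; exact: rmv_G4.
- move=> i hi; case: (rmv_surj hi hr) => hj hne he; exists (i + (r <= i)); split => //; exact: G5.
- exact: G6.
- lia.
Qed.

Lemma case_PP r : ~~ odd (lam c) -> lam o = 2 * r -> lam c + 2 = lam o -> Inv k Y.
Proof.
move=> oc eo eco; have hP' := hP; case: hP' => c1 c2 c3 c4 [c5 c6].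
have hr : r < p by move: (c4 o); rewrite /lvl_ok eo odd2; lia.
apply: (@case_rmv r) => //.
- move=> t ht hd; have -> : lam c = 2 * r - 2 by lia.
  apply: rmv_pp => //; try lia; by rewrite distC -eo.
- move=> w nc no _ ow; move: (ow); rewrite rmv_odd negbK => /andP[ow' nw].
  case: (posnP (mul c w)) => [->|pc]; first by rewrite add0n; apply: c2 => //; rewrite eo odd2.
  case: (posnP (mul o w)) => [->|po]; first by rewrite addn0; apply: c2.
  exfalso; move: (c1 _ _ pc) (c1 _ _ po); rewrite eo; case: (even_ex (negbTE ow')) => q eq.
  rewrite eq => d1 d2.
  have : (q = r - 1) \/ (q = r) by move: eco d1 d2; rewrite eo /dist; lia.
  case=> eq'.
    have ecw : c = w by apply: c3 => //; lia.
    by move: nc; rewrite ecw eqxx.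
  have eow : o = w by apply: c3; [by rewrite eo odd2 | lia].
  by move: no; rewrite eow eqxx.
- by move=> j; rewrite eo.
Qed.
Lemma p3 : 3 <= p.
Proof. case: hP => _ _ _ _ [_ c6]; move: hlt; lia. Qed.

Lemma case_SP r : odd (lam c) -> lam o = 2 * r -> dist (lam c) (lam o) <= 2 -> Inv k Y.
Proof.
move=> oc eo hd; have hP' := hP; case: hP' => c1 c2 c3 c4 [c5 c6].
have hr : r < p by move: (c4 o); rewrite /lvl_ok eo odd2; lia.
have hd1 : dist (lam c) (2 * r) <= 1.
  move: hd oc; rewrite eo; case: (parity (lam c)) => [[q [-> _]]|[q [-> _]]];
    rewrite ?odd2 ?odd21 // /dist; lia.
apply: (@case_rmv r) => //.
- move=> t ht hdt; rewrite (rmv_sp _ oc hd1) -eo; apply: rmv_lip; [exact: p3|exact: hr|exact: c4|exact: ht|exact: hdt].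
- by move=> w _ _; rewrite rmv_odd negbK oc.
- by move=> j; rewrite eo.
Qed.

Lemma case_SSsame : lam c = lam o -> Inv k Y.
Proof.
move=> e; have hP' := hP; case: hP' => c1 c2 c3 c4 [c5 c6].
have oc : odd (lam c).
  apply/negPn/negP => h; move: hco; by rewrite (c3 c o h e) eqxx.
apply: (@step_contract_gen k X Y f c o lam p p id hP hco fsurj fco ffib fmul).
- by move=> t t' _ _.
- by move=> t ht; rewrite /= e.
- by move=> t.
- by move=> t t' _ _ ht he; split.
- move=> i hi; exists i; split => //; apply/eqP => e2; move: oc; by rewrite e -e2 odd2.
- by move=> w _ _ /=; rewrite oc.
- lia.
Qed.

Lemma case_SSdiff : odd (lam c) -> lam o = lam c + 2 -> Inv k Y.
Proof.
move=> oc eo; have hP' := hP; case: hP' => c1 c2 c3 c4 [c5 c6].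
have oo : odd (lam o) by rewrite eo oddD oc.
case: (@even_ex (lam c + 1)) => [|r er]; first by rewrite oddD oc.
have hr : r < p by move: (c4 o); rewrite /lvl_ok oo; lia.
case: (rmv_ss p oc er) => e1 e2.
apply: (@case_rmv r) => //.
- move=> t ht hdt; rewrite e1 -e2 -eo; apply: rmv_lip; [exact: p3|exact: hr|exact: c4|exact: ht|exact: hdt].
- by move=> w _ _; rewrite rmv_odd negbK oc.
- move=> j _; apply/eqP => e; move: oo; by rewrite -e odd2.
Qed.

End Contr.

Lemma step_contract k X Y : contract X Y -> k + 2 <= nv Y -> Inv k X -> Inv k Y.
Proof.
case=> a [b [hab [f [fsurj [fab [ffib fmul]]]]]] hnv [lam [p hP]].
have hP' := hP; case: hP' => c1 c2 c3 c4 [c5 c6].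
have hne : a != b by apply/eqP => e; subst b; move: hab; rewrite mul_irr.
have hne' : b != a by rewrite eq_sym.
have ffib' : forall u w, f u = f w -> [\/ u = w, u = b /\ w = a | u = a /\ w = b].
  by move=> u w /ffib [] ?; [apply: Or31|apply: Or33|apply: Or32].
have fba : f b = f a by [].
have hd : dist (lam a) (lam b) <= 2 by apply: c1; rewrite hab.
case oa: (odd (lam a)); case ob: (odd (lam b)).
- case: (eqVneq (lam a) (lam b)) => [e|ne].
    exact: (case_SSsame hP hne fsurj fab ffib fmul hnv e).
  have [e|e] : lam b = lam a + 2 \/ lam a = lam b + 2.
    move: hd ne oa ob; case: (parity (lam a)) => [[q [-> _]]|[q [-> _]]];
    case: (parity (lam b)) => [[q' [-> _]]|[q' [-> _]]]; rewrite ?odd2 ?odd21 // /dist; lia.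
    exact: (case_SSdiff hP hne fsurj fab ffib fmul hnv oa e).
  exact: (case_SSdiff hP hne' fsurj fba ffib' fmul hnv ob e).
- case: (even_ex ob) => r er.
  exact: (case_SP hP hne fsurj fab ffib fmul hnv oa er hd).
- case: (even_ex oa) => r er.
  by apply: (case_SP hP hne' fsurj fba ffib' fmul hnv ob er); rewrite distC.
- have ne : lam a != lam b.
    by apply/eqP => e; move: hne; rewrite (c3 a b) ?oa ?eqxx.
  have [e|e] : lam b = lam a + 2 \/ lam a = lam b + 2.
    move: hd ne oa ob; case: (parity (lam a)) => [[q [-> _]]|[q [-> _]]];
    case: (parity (lam b)) => [[q' [-> _]]|[q' [-> _]]]; rewrite ?odd2 ?odd21 // /dist; lia.
    case: (even_ex ob) => r er.
    by apply: (case_PP hP hne fsurj fab ffib fmul hnv (r := r)); rewrite ?oa.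
  case: (even_ex oa) => r er.
  by apply: (case_PP hP hne' fsurj fba ffib' fmul hnv (r := r)); rewrite ?ob.
Qed.

Lemma step_inv k X Y : minor_step X Y -> k + 2 <= nv Y -> Inv k X -> Inv k Y.
Proof.
case.
- case=> f [fb hm] _; apply: (step_bij fb) => u w; by rewrite hm.
- case=> f [fb [a [b [_ hm]]]] _; apply: (step_bij fb) => u w; rewrite hm; exact: leq_subr.
- move=> hd hnv; exact: step_deliso.
- move=> hc hnv; exact: step_contract.
Qed.

Lemma chain_inv k G H : is_minor G H -> k + 2 <= nv G -> Inv k H -> Inv k G.
Proof.
elim=> // X X' st hm IH hk hI; apply: IH => //.
apply: (step_inv st) => //; apply: leq_trans hk _; exact: minor_nv.
Qed.

Lemma stepsP G (vs : seq 'I_(nv G)) ls x : size ls = (size vs).-1 ->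
  reflect (forall j, j < size ls -> nth 0 ls j < mul (nth x vs j) (nth x vs j.+1))
          (all (fun t => t.2 < mul t.1.1 t.1.2) (steps vs ls)).
Proof.
move=> hs; have hsz : size (steps vs ls) = size ls.
  rewrite /steps !size_zip size_behead hs; lia.
apply: (iffP (all_nthP ((x, x), 0))) => h j hj.
  move: (h j); rewrite hsz => /(_ hj); rewrite /steps nth_zip_cond size_zip.
  rewrite size_zip size_behead hs ifT /=; last by lia.
  rewrite nth_zip_cond size_zip size_behead ifT /=; last by lia.
  by rewrite nth_behead.
rewrite /steps nth_zip_cond size_zip size_zip size_behead hs ifT /=; last by move: hj; rewrite hsz; lia.
rewrite nth_zip_cond size_zip size_behead ifT /=; last by move: hj; rewrite hsz; lia.
rewrite nth_behead; apply: h; by rewrite -hsz.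
Qed.

Lemma ohead_rev (T : Type) (x : T) s : ohead (rev (x :: s)) = Some (last x s).
Proof. by rewrite lastI rev_rcons. Qed.

Lemma last_take (T : Type) (x : T) s i : i <= size s -> last x (take i s) = nth x (x :: s) i.
Proof.
elim: s x i => [|y s IH] x [|i] //= hi.
by rewrite IH // (set_nth_default y).
Qed.

Definition eadj (G : mgraph) : rel 'I_(nv G) := fun u w => 0 < mul u w.

Lemma path_of_is_path G x0 s0 ls : @is_path G (x0 :: s0) ls ->
  path (@eadj G) x0 s0 /\ forall j, j < size s0 -> nth 0 ls j < mul (nth x0 (x0 :: s0) j) (nth x0 s0 j).
Proof.
case=> _ _ hs /(stepsP x0 hs) h; rewrite /= in hs.
have h' : forall j, j < size s0 -> nth 0 ls j < mul (nth x0 (x0 :: s0) j) (nth x0 s0 j).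
  by move=> j hj; apply: h; rewrite hs.
split => //; apply/(pathP x0) => j hj; rewrite /eadj; exact: leq_ltn_trans (leq0n _) (h' j hj).
Qed.

Section Init.
Variables (H : mgraph) (x0 : 'I_(nv H)) (s0 : seq 'I_(nv H)) (ls : seq nat).
Hypothesis hu : is_usp (x0 :: s0) ls.
Let e := @eadj H.
Let xl := last x0 s0.
Let N := nv H.

Lemma ppath : path e x0 s0. Proof. exact: (path_of_is_path hu.1).1. Qed.
Lemma plab j : j < size s0 -> nth 0 ls j < mul (nth x0 (x0 :: s0) j) (nth x0 s0 j).
Proof. exact: (path_of_is_path hu.1).2. Qed.
Lemma psize : (size s0).+1 <= N. Proof. exact: (path_size hu.1). Qed.
Lemma lsize : size ls = size s0. Proof. by case: hu => [[_ _ ->]]. Qed.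

Lemma KL s : path e x0 s -> last x0 s = xl -> size s <= size s0 ->
  size s = size s0 /\ {subset s <= s0}.
Proof.
move=> pth; move: (shortenP pth) => [s' ps' us' sub] hl hsz.
have hp : is_path (x0 :: s') (nseq (size s') 0).
  split => //; first by rewrite size_nseq.
  apply/(stepsP x0); first by rewrite size_nseq.
  move=> j; rewrite size_nseq => hj; rewrite nth_nseq hj.
  by move/(pathP x0): ps' => /(_ j hj).
have hse : same_ends (x0 :: s0) (x0 :: s') by split => //; rewrite !ohead_rev hl.
case: (hu.2 _ _ hp hse) => /= hle heq.
have us1 : uniq s' by case/andP: us'.
have h1 : size s' <= size s by apply: uniq_leq_size.
have hs' : size s' = size s0 by apply/eqP; rewrite eqn_leq (leq_trans h1 hsz) /= -ltnS.
case: (heq (congr1 S hs')) => [[es] _]; subst s'.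
case: (uniq_min_size us1 sub) => [|_ hi]; first exact: hsz.
split; first by apply/eqP; rewrite eqn_leq hsz.
by move=> z; rewrite hi.
Qed.

Definition reach d v := exists s, [/\ path e x0 s, last x0 s = v & size s = d].
Definition fd (v : 'I_(nv H)) : nat := \big[minn/N]_(d < N | `[< reach d v >]) (d : nat).

Lemma bigmin_le (I : eqType) (r : seq I) (P : pred I) (F : I -> nat) idx i0 :
  i0 \in r -> P i0 -> \big[minn/idx]_(i <- r | P i) F i <= F i0.
Proof.
elim: r => [//|x r IH]; rewrite inE big_cons => /orP [/eqP <-|hr] hP.
  by rewrite hP geq_minl.
case: (P x); last exact: IH.
exact: leq_trans (geq_minr _ _) (IH hr hP).
Qed.

Lemma fd_le d v : reach d v -> d < N -> fd v <= d.
Proof.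
move=> hr hd; rewrite /fd; apply: (@bigmin_le _ _ _ (fun i : 'I_N => (i : nat)) _ (Ordinal hd)).
  exact: mem_index_enum.
by apply/asboolP.
Qed.

Lemma fd_leN v : fd v <= N.
Proof. rewrite /fd; elim/big_rec: _ => // i x _ h; exact: leq_trans (geq_minr _ _) h. Qed.

Lemma fd_reach v : fd v < N -> reach (fd v) v.
Proof.
rewrite /fd; elim/big_rec: _ => [|i x /asboolP hi IH]; first by rewrite ltnn.
case: (leqP i x) => h; [by move=> _ | exact: IH].
Qed.

Notation X i := (nth x0 (x0 :: s0) i).

Lemma NX : (size s0) < N. Proof. exact: psize. Qed.

Lemma reach_prefix i : i <= size s0 -> reach i (X i).
Proof.
move=> hi; exists (take i s0); split; [exact: take_path ppath | exact: last_take | exact: size_takel].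
Qed.

Lemma suffix_path i : i <= size s0 -> path e (X i) (drop i s0) /\ last (X i) (drop i s0) = xl.
Proof.
move=> hi; have := ppath; rewrite -{1}(cat_take_drop i s0) cat_path last_take // => /andP[_ h].
split => //; by rewrite -(last_take x0 hi) -last_cat cat_take_drop.
Qed.

Lemma F1 i : i <= size s0 -> fd (X i) = i.
Proof.
move=> hi; have h1 : fd (X i) <= i by apply: fd_le; [exact: reach_prefix | move: NX; lia].
apply/eqP; rewrite eqn_leq h1 /= leqNgt; apply/negP => hlt.
have hN : fd (X i) < N by move: NX; lia.
case: (fd_reach hN) => s1 [p1 l1 z1].
case: (suffix_path hi) => p2 l2.
have hp : path e x0 (s1 ++ drop i s0) by rewrite cat_path p1 l1 p2.
have hl : last x0 (s1 ++ drop i s0) = xl by rewrite last_cat l1.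
have hs : size (s1 ++ drop i s0) <= size s0 by rewrite size_cat size_drop z1; lia.
case: (KL hp hl hs) => hs' _; move: hs'; rewrite size_cat size_drop z1; lia.
Qed.

Lemma F2 u w : e u w -> fd w <= (fd u).+1.
Proof.
move=> huw; case: (ltnP (fd u) N) => hN; last by apply: leq_trans (fd_leN w) _; lia.
case: (fd_reach hN) => s1 [p1 l1 z1].
case: (ltnP (fd u).+1 N) => hN'; last by apply: leq_trans (fd_leN w) _.
apply: fd_le => //; exists (rcons s1 w); split.
- by rewrite rcons_path p1 l1.
- exact: last_rcons.
- by rewrite size_rcons z1.
Qed.

Lemma F3 w j : w \notin x0 :: s0 -> e w (X j) -> j <= size s0 -> j <= fd w.
Proof.
move=> hw hwj hj; rewrite leqNgt; apply/negP => hlt.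
have hN : fd w < N by move: NX; lia.
case: (fd_reach hN) => s1 [p1 l1 z1].
case: (suffix_path hj) => p2 l2.
pose s := rcons s1 (X j) ++ drop j s0.
have hp : path e x0 s by rewrite /s cat_path rcons_path p1 l1 hwj last_rcons p2.
have hl : last x0 s = xl by rewrite /s last_cat last_rcons.
have hs : size s <= size s0 by rewrite /s size_cat size_rcons size_drop z1; lia.
case: (KL hp hl hs) => _ hsub.
have : w \in x0 :: s1 by rewrite -l1 mem_last.
rewrite inE => /orP [/eqP ew|hw1].
  by move: hw; rewrite ew mem_head.
have : w \in s0 by apply: hsub; rewrite /s mem_cat mem_rcons inE hw1 orbT.
by move=> h; move: hw; rewrite inE h orbT.
Qed.

Lemma F0 w : w \notin x0 :: s0 -> 0 < fd w.
Proof.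
move=> hw; rewrite lt0n; apply/negP => /eqP h0.
have hN : fd w < N by rewrite h0; exact: nv_gt0.
case: (fd_reach hN) => s1 [_ l1 z1]; move: z1; rewrite h0 => /size0nil es; subst s1.
by move: hw; rewrite -l1 mem_head.
Qed.

Lemma U2 i : i < size s0 -> mul (X i) (X i.+1) <= 1.
Proof.
move=> hi; rewrite leqNgt; apply/negP => h2.
pose l' := if nth 0 ls i == 0 then 1 else 0.
pose ls' := set_nth 0 ls i l'.
have hsz : size ls' = size s0 by rewrite /ls' size_set_nth lsize; lia.
have hp : is_path (x0 :: s0) ls'.
  case: hu => [[h1 h2' _ _] _]; split => //.
  apply/(stepsP x0) => //= j hj; rewrite /ls' nth_set_nth /=.
  case: eqP => [->|_]; last by apply: plab; rewrite -hsz.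
  by apply: leq_ltn_trans h2; rewrite /l'; case: eqP.
case: (hu.2 _ _ hp) => // _ /(_ erefl) [_ e'].
move: (congr1 (fun l => nth 0 l i) e'); rewrite /ls' nth_set_nth /= eqxx /l'.
by case: (nth 0 ls i).
Qed.
End Init.

Lemma init_inv k H (x0 : 'I_(nv H)) s0 ls : is_usp (x0 :: s0) ls -> 1 <= size s0 ->
  nv H <= (size s0).+1 + k -> Inv k H.
Proof.
move=> hu hs1 hnv.
pose F := @fd H x0.
pose lam v := if v \in x0 :: s0 then 2 * index v (x0 :: s0) else 2 * minn (F v) (size s0) - 1.
have huniq : uniq (x0 :: s0) by case: hu => [[]].
have hin : forall v, v \in x0 :: s0 ->
    [/\ lam v = 2 * index v (x0 :: s0), index v (x0 :: s0) <= size s0,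
        nth x0 (x0 :: s0) (index v (x0 :: s0)) = v & F v = index v (x0 :: s0)].
  move=> v hv; have hi : index v (x0 :: s0) <= size s0 by rewrite -ltnS -[(size s0).+1]/(size (x0 :: s0)) index_mem.
  split => //; first by rewrite /lam hv.
    exact: nth_index.
  by rewrite /F -{1}(nth_index x0 hv) (F1 hu hi).
have hout : forall v, v \notin x0 :: s0 ->
    [/\ lam v = 2 * (minn (F v) (size s0) - 1) + 1, 1 <= F v & odd (lam v)].
  move=> v hv; have h0 := F0 hv.
  have e1 : lam v = 2 * (minn (F v) (size s0) - 1) + 1 by rewrite /lam (negbTE hv) /F; move: h0 hs1; lia.
  by split => //; rewrite e1 odd21.
have Fsym : forall u w, 0 < mul u w -> F w <= (F u).+1 /\ F u <= (F w).+1.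
  move=> u w h; split; apply: (F2 x0); by rewrite /eadj // mul_sym.
exists lam, (size s0).+1; split.
- move=> u w h; case: (Fsym u w h) => f1 f2.
  case: (boolP (u \in x0 :: s0)) => hu'; case: (boolP (w \in x0 :: s0)) => hw'.
  + case: (hin u hu') => -> _ _ e1; case: (hin w hw') => -> _ _ e2.
    move: f1 f2; rewrite e1 e2 /dist; lia.
  + case: (hin u hu') => -> i1 n1 e1; case: (hout w hw') => -> g1 _.
    have f3 := F3 hu hw' (j := index u (x0 :: s0)).
    rewrite n1 in f3; have := f3 _ i1; rewrite /eadj mul_sym => /(_ h) f4.
    move: f1 f4 i1 g1 hs1; rewrite e1 /dist /F; lia.
  + case: (hin w hw') => -> i1 n1 e1; case: (hout u hu') => -> g1 _.
    have f3 := F3 hu hu' (j := index w (x0 :: s0)).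
    rewrite n1 in f3; have := f3 _ i1; rewrite /eadj => /(_ h) f4.
    move: f2 f4 i1 g1 hs1; rewrite e1 /dist /F; lia.
  + case: (hout u hu') => -> g1 _; case: (hout w hw') => -> g2 _.
    move: f1 f2 g1 g2 hs1; rewrite /dist /F; lia.
- move=> u w ou ow.
  have hu' : u \in x0 :: s0 by apply/negPn/negP => h; case: (hout u h) => _ _ o; move: ou; rewrite o.
  have hw' : w \in x0 :: s0 by apply/negPn/negP => h; case: (hout w h) => _ _ o; move: ow; rewrite o.
  case: (posnP (mul u w)) => [->//|hm].
  case: (Fsym u w hm) => f1 f2.
  case: (hin u hu') => _ i1 n1 e1; case: (hin w hw') => _ i2 n2 e2.
  have hij : index u (x0 :: s0) != index w (x0 :: s0).
    apply/eqP => e; move: hm; by rewrite -n1 e n2 mul_irr.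
  move: f1 f2; rewrite e1 e2 => f1 f2.
  have [ej|ei] : index w (x0 :: s0) = (index u (x0 :: s0)).+1 \/
                 index u (x0 :: s0) = (index w (x0 :: s0)).+1 by move: hij; lia.
  + rewrite -n1 -n2 ej; apply: (U2 hu); lia.
  + rewrite mul_sym -n1 -n2 ei; apply: (U2 hu); lia.
- move=> u w ou e.
  have hu' : u \in x0 :: s0 by apply/negPn/negP => h; case: (hout u h) => _ _ o; move: ou; rewrite o.
  have hw' : w \in x0 :: s0.
    by apply/negPn/negP => h; case: (hout w h) => _ _ o; move: ou; rewrite e o.
  case: (hin u hu') => l1 _ n1 _; case: (hin w hw') => l2 _ n2 _.
  move: e; rewrite l1 l2 => e; rewrite -n1 -n2; congr nth; lia.
- move=> u; case: (boolP (u \in x0 :: s0)) => h.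
    case: (hin u h) => l1 i1 _ _; rewrite /lvl_ok l1 odd2; lia.
  case: (hout u h) => l1 _ o1; rewrite /lvl_ok o1 l1; lia.
- split; last lia.
  move=> i hi; exists (nth x0 (x0 :: s0) i).
  by case: (hin _ (@mem_nth _ x0 (x0 :: s0) i hi)) => -> _ _ _; rewrite index_uniq.
Qed.

Section Final.
Variables (G0 : mgraph) (lam : 'I_(nv G0) -> nat) (p m : nat).
Hypothesis c3 : forall u w, ~~ odd (lam u) -> lam u = lam w -> u = w.
Hypothesis c4 : forall u, lvl_ok p (lam u).
Hypothesis c5 : forall i, i < p -> exists u, lam u = 2 * i.
Hypothesis hp2 : 2 <= p.
Hypothesis hm : 1 <= m.

Definition mulC (u w : 'I_(nv G0)) : nat :=
  if u == w then 0 else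
  if ~~ odd (lam u) && ~~ odd (lam w) then (if dist (lam u) (lam w) == 2 then 1 else 0)
  else (if dist (lam u) (lam w) <= 2 then m else 0).

Lemma mulC_sym u w : mulC u w = mulC w u.
Proof. by rewrite /mulC eq_sym distC andbC. Qed.
Lemma mulC_irr u : mulC u u = 0.
Proof. by rewrite /mulC eqxx. Qed.

Definition GC := @MGraph (nv G0) mulC mulC_sym mulC_irr (nv_gt0 G0).

Let v0 : 'I_(nv G0) := Ordinal (nv_gt0 G0).
Definition pv i := odflt v0 [pick u | lam u == 2 * i].
Lemma pv_lam i : i < p -> lam (pv i) = 2 * i.
Proof.
move=> hi; rewrite /pv; case: pickP => [u /eqP //|h0].
case: (c5 hi) => u hu; move: (h0 u); by rewrite hu eqxx.
Qed.

Definition PP := map pv (iota 0 p).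
Lemma size_PP : size PP = p. Proof. by rewrite size_map size_iota. Qed.
Lemma nth_PP i : i < p -> nth v0 PP i = pv i.
Proof. move=> hi; by rewrite (nth_map 0) ?size_iota // nth_iota. Qed.

Lemma lam_bound u : ~~ odd (lam u) -> exists2 q, lam u = 2 * q & q < p.
Proof.
move=> ou; case: (even_ex (negbTE ou)) => q eq; exists q => //.
move: (c4 u); rewrite /lvl_ok (negbTE ou) eq; lia.
Qed.

Lemma pv_eq u q : lam u = 2 * q -> q < p -> u = pv q.
Proof.
move=> eq hq; apply: c3; first by rewrite eq odd2.
by rewrite pv_lam.
Qed.

Lemma memPP u : (u \in PP) = ~~ odd (lam u).
Proof.
apply/idP/idP.
  by case/mapP => i; rewrite mem_iota add0n => /andP[_ hi] ->; rewrite pv_lam // odd2.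
move=> ou; case: (lam_bound ou) => q eq hq; apply/mapP; exists q.
  by rewrite mem_iota add0n.
exact: pv_eq.
Qed.

Lemma uniq_PP : uniq PP.
Proof.
rewrite map_inj_in_uniq ?iota_uniq // => i j; rewrite !mem_iota !add0n => /andP[_ hi] /andP[_ hj] e.
by move: (congr1 lam e); rewrite !pv_lam //; lia.
Qed.

Lemma mulC_pos u w : 0 < mulC u w -> dist (lam u) (lam w) <= 2.
Proof.
rewrite /mulC; case: eqP => // _; case: ifP => _; case: ifP => h // _.
by rewrite (eqP h).
Qed.

Lemma ohead_nth (T : eqType) (x0 : T) s t : ohead s = ohead t -> t != [::] -> nth x0 s 0 = nth x0 t 0.
Proof. by case: t => // y t; case: s => //= x s [->]. Qed.

Lemma ohead_rev_nth (T : eqType) (x0 : T) s t : ohead (rev s) = ohead (rev t) -> t != [::] ->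
  nth x0 s (size s).-1 = nth x0 t (size t).-1.
Proof.
case/lastP: t => // t y; case/lastP: s => [|s x]; rewrite !rev_rcons //= => [[->]] _.
by rewrite !nth_rcons !size_rcons /= !ltnn !eqxx.
Qed.

Lemma pv_ne i j : i < p -> j < p -> i != j -> pv i != pv j.
Proof. move=> hi hj hij; apply/eqP => e; move: (congr1 lam e); rewrite !pv_lam //; lia. Qed.

Lemma mulC_pv i : i.+1 < p -> mulC (pv i) (pv i.+1) = 1.
Proof.
move=> hi; have hne : pv i != pv i.+1 by apply: pv_ne; lia.
rewrite /mulC (negbTE hne) !pv_lam ?odd2 /=; try lia.
rewrite ifT //; apply/eqP; rewrite /dist; lia.
Qed.

Lemma PP_path : is_path (G:=GC) PP (nseq p.-1 0).
Proof.
split.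
- by rewrite -size_eq0 size_PP; lia.
- exact: uniq_PP.
- by rewrite size_nseq size_PP.
- have hs : size (nseq p.-1 0) = (size PP).-1 by rewrite size_nseq size_PP.
  apply/(@stepsP GC _ _ v0 hs).
  move=> j; rewrite size_nseq => hj; rewrite nth_nseq hj !nth_PP //; try lia.
  by rewrite /= mulC_pv //; lia.
Qed.

Lemma PP_usp : is_usp (G:=GC) PP (nseq p.-1 0).
Proof.
split; first exact: PP_path.
move=> vs' ls' [hne _ hsz hst] [hh hl].
have hPP : PP != [::] by rewrite -size_eq0 size_PP; lia.
have h0 : lam (nth v0 vs' 0) = 0 by rewrite (ohead_nth v0 hh hPP) nth_PP ?pv_lam //; lia.
have hL : lam (nth v0 vs' (size vs').-1) = 2 * p.-1.
  by rewrite (ohead_rev_nth v0 hl hPP) size_PP nth_PP ?pv_lam //; lia.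
have hL0 : 0 < size vs' by rewrite lt0n size_eq0.
have hst' := elimT (@stepsP GC vs' ls' v0 hsz) hst.
have hstep : forall j, j.+1 < size vs' -> dist (lam (nth v0 vs' j)) (lam (nth v0 vs' j.+1)) <= 2.
  move=> j hj; apply: mulC_pos; apply: leq_ltn_trans (leq0n _) _.
  apply: hst'; rewrite hsz; lia.
have up : forall j, j < size vs' -> lam (nth v0 vs' j) <= 2 * j.
  elim=> [|j IH] hj; first by rewrite h0.
  have := hstep j hj; have := IH (ltnW hj); rewrite /dist; lia.
have down : forall d, d < size vs' -> 2 * p.-1 <= lam (nth v0 vs' ((size vs').-1 - d)) + 2 * d.
  elim=> [|d IH] hd; first by rewrite subn0 hL addn0.
  have e : (size vs').-1 - d = ((size vs').-1 - d.+1).+1 by lia.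
  have := hstep ((size vs').-1 - d.+1) ltac:(lia); rewrite -e; have := IH (ltnW hd).
  rewrite /dist; lia.
have hge : p <= size vs' by have := up (size vs').-1 ltac:(lia); rewrite hL; lia.
rewrite size_PP; split => // hsp.
have hall : forall j, j < p -> nth v0 vs' j = pv j.
  move=> j hj; apply: pv_eq => //; have := up j ltac:(lia); have := down (p.-1 - j) ltac:(lia).
  have -> : (size vs').-1 - (p.-1 - j) = j by lia.
  lia.
have evs : vs' = PP.
  apply: (@eq_from_nth _ v0); first by rewrite size_PP.
  move=> j hj; rewrite nth_PP -?hsp // hall // -hsp //.
split => //.
apply: (@eq_from_nth _ 0); first by rewrite size_nseq hsz hsp.
move=> j hj; rewrite nth_nseq; have hj' : j < p.-1 by rewrite -hsp -hsz.
rewrite hj'; move: (hst' j hj).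
rewrite evs !nth_PP ?mulC_pv //; try lia.
by rewrite /= mulC_pv; [lia|lia].
Qed.

Lemma adjC u w : odd (lam u) || odd (lam w) -> u != w ->
  (0 < mulC u w) = (dist (lam u) (lam w) <= 2).
Proof.
move=> ho hne; rewrite /mulC (negbTE hne).
have -> : (~~ odd (lam u) && ~~ odd (lam w)) = false by case: (odd (lam u)) ho; case: (odd (lam w)).
by case: ifP => //; rewrite hm.
Qed.

Lemma steps_pv i : i.+1 < p -> ((pv i, pv i.+1), 0) \in steps PP (nseq p.-1 0).
Proof.
move=> hi; apply/(nthP ((v0, v0), 0)); exists i.
  rewrite /steps !size_zip size_behead size_nseq size_PP; lia.
rewrite /steps nth_zip_cond !size_zip size_behead size_nseq size_PP ifT; last by lia.
rewrite nth_zip_cond size_zip size_behead size_PP ifT /=; last by lia.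
by rewrite nth_behead !nth_PP ?nth_nseq ?ifT //; lia.
Qed.

Lemma PP_i v : v \notin PP ->
  #|[set x | (x \in PP) && (0 < mulC v x)]| = 2 /\
  forall x y, x \in PP -> y \in PP -> 0 < mulC v x -> 0 < mulC v y -> x != y -> 0 < mulC x y.
Proof.
rewrite memPP negbK => ov.
case: (parity (lam v)) => [[q [_ o]]|[e [ev _]]]; first by rewrite o in ov.
have he : e.+1 < p by move: (c4 v); rewrite /lvl_ok ov ev; lia.
have hx : forall x, x \in PP -> (0 < mulC v x) = (x == pv e) || (x == pv e.+1).
  move=> x; rewrite memPP => ox.
  have hne : v != x by apply/eqP => e'; move: ox; rewrite -e' ov.
  rewrite adjC ?ov // ev; case: (lam_bound ox) => q eq hq; rewrite eq.
  apply/idP/idP.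
    move=> hd; have [eq'|eq'] : q = e \/ q = e.+1 by move: hd; rewrite /dist; lia.
      by subst q; rewrite (pv_eq eq) ?eqxx //; lia.
    by subst q; rewrite (pv_eq eq) ?eqxx ?orbT //.
  case/orP => /eqP ex; move: eq; rewrite ex pv_lam //; try lia; rewrite /dist; lia.
split.
  have -> : [set x | (x \in PP) && (0 < mulC v x)] = [set pv e; pv e.+1].
    apply/setP => x; rewrite !inE; case: (boolP (x \in PP)) => hxP /=; first exact: hx.
    apply/esym/negbTE; apply/negP => /orP [] /eqP ex; move: hxP; rewrite ex memPP pv_lam ?odd2 //; lia.
  rewrite cards2 (pv_ne (i := e) (j := e.+1)) //; lia.
move=> x y hxP hyP; rewrite (hx x hxP) (hx y hyP).
case/orP => /eqP ->; case/orP => /eqP -> //; rewrite ?eqxx // => _; rewrite ?mulC_pv //.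
by rewrite mulC_sym mulC_pv.
Qed.

Lemma PP_ii u v x : u \notin PP -> v \notin PP -> u != v -> x \in PP ->
  0 < mulC u x -> 0 < mulC v x -> 0 < mulC u v.
Proof.
rewrite !memPP !negbK => ou ov huv ox.
have hux : u != x by apply/eqP => e; move: ox; rewrite -e ou.
have hvx : v != x by apply/eqP => e; move: ox; rewrite -e ov.
rewrite !adjC ?ou ?ov //.
case: (parity (lam u)) => [[q [_ o]]|[a [ea _]]]; first by rewrite o in ou.
case: (parity (lam v)) => [[q [_ o]]|[b [eb _]]]; first by rewrite o in ov.
case: (parity (lam x)) => [[c [ec _]]|[q [_ o]]]; last by rewrite o in ox.
rewrite ea eb ec /dist; lia.
Qed.

Lemma PP_sat a b l : l < mulC a b -> ~~ in_parade PP (nseq p.-1 0) a b l -> mulC a b = m.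
Proof.
move=> hl hnp; have hne : a != b by apply/eqP => e; move: hl; rewrite e mulC_irr.
case: (boolP (odd (lam a) || odd (lam b))) => ho.
  move: hl; rewrite /mulC (negbTE hne).
  have -> : (~~ odd (lam a) && ~~ odd (lam b)) = false by case: (odd (lam a)) ho; case: (odd (lam b)).
  by case: ifP.
exfalso; move: ho; rewrite negb_or => /andP[oa ob].
move: hl; rewrite /mulC (negbTE hne) oa ob /=; case: ifP => // /eqP hd hl.
have l0 : l = 0 by lia.
subst l; case: (lam_bound oa) => i ei hi; case: (lam_bound ob) => j ej hj.
move: hd; rewrite ei ej /dist => hd.
have [e1|e1] : j = i.+1 \/ i = j.+1 by lia.
  subst j; move: hnp; rewrite /in_parade (pv_eq ei) // (pv_eq ej) // steps_pv //.
subst i; move: hnp; rewrite /in_parade (pv_eq ei) // (pv_eq ej) // steps_pv ?orbT //.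
Qed.

Lemma GC_sat : usp GC = p -> sat_crowded_parade GC m p.
Proof.
move=> hu; right; split => //; exists PP, (nseq p.-1 0); split.
- split; [exact: PP_usp | by rewrite size_PP].
- exact: size_PP.
- move=> v hv; exact: PP_i.
- move=> u v x hu' hv' huv hx; exact: PP_ii.
- move=> a b l hl hnp; exact: PP_sat hl hnp.
Qed.

End Final.


Lemma class_up (G G' : mgraph) : is_minor G G' -> spfloor G <= spfloor G'.
Proof.
move=> hm; case: (spfloor_spec G') => H [hm' <-]; apply: spfloor_le; exact: minor_trans hm'.
Qed.

Lemma sub_minor (G : mgraph) (M : 'I_(nv G) -> 'I_(nv G) -> nat) s i :
  (forall u w, mul u w <= M u w) -> is_minor G (@MGraph (nv G) M s i (nv_gt0 G)).
Proof. move: M s i; case: G => n0 M0 s0 i0 p0 M s i h /=; exact: del_chain. Qed.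

Lemma graph_eta (G : mgraph) (M : 'I_(nv G) -> 'I_(nv G) -> nat) s i :
  (forall u w, mul u w = M u w) -> G = @MGraph (nv G) M s i (nv_gt0 G).
Proof.
move: M s i; case: G => n0 M0 s0 i0 p0 M s i h /=; apply: mgraph_eq.
by apply: functional_extensionality_dep => u; apply: functional_extensionality_dep => w.
Qed.

Lemma iso_sub_eq (G : mgraph) (M : 'I_(nv G) -> 'I_(nv G) -> nat) s i :
  (forall u w, mul u w <= M u w) -> iso (@MGraph (nv G) M s i (nv_gt0 G)) G ->
  forall u w, mul u w = M u w.
Proof.
move=> hle [f [fb hf]].
pose g : 'I_(nv G) -> 'I_(nv G) := f.
have gi : injective g := bij_inj fb.
have hg : forall u w, @mul G (g u) (g w) = M u w := hf.
have hs : \sum_u \sum_w @mul G u w = \sum_u \sum_w M u w.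
  have e1 : \sum_u \sum_w M u w = \sum_u \sum_w @mul G (g u) (g w).
    by apply: eq_bigr => u _; apply: eq_bigr => w _; rewrite hg.
  have e2 : forall x, \sum_w @mul G x w = \sum_w @mul G x (g w) by move=> x; rewrite (reindex_inj gi).
  have e3 : \sum_u \sum_w @mul G u w = \sum_u \sum_w @mul G (g u) w.
    by rewrite (reindex_inj gi).
  rewrite e1 e3; apply: eq_bigr => u _; exact: e2.
have h0 : forall x, \sum_w @mul G x w <= \sum_w M x w by move=> x; apply: leq_sum => y _.
move=> u w; apply: (@sum_eq_pt _ (@mul G u) (M u)); first by move=> x; exact: hle.
exact: (sum_eq_pt h0 hs u).
Qed.

Theorem theorem7p6 (n m k : nat) (G : mgraph) :
  (k + 2 <= n /\ 1 <= m) \/ (k + 1 = n /\ 2 <= m) ->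
  minor_maximal (the_class n m k) G ->
  sat_crowded_parade G m (n - k).
Proof.
move=> hyp [[hn hmG hsf] hmax].
case: hyp => [[hk hm]|[hk hm]]; last first.
- pose M (u w : 'I_(nv G)) := if u == w then 0 else m.
  have Ms : forall u w, M u w = M w u by move=> u w; rewrite /M eq_sym.
  have Mi : forall u, M u u = 0 by move=> u; rewrite /M eqxx.
  pose K := @MGraph (nv G) M Ms Mi (nv_gt0 G).
  have hle : forall u w, @mul G u w <= M u w.
    move=> u w; rewrite /M; case: eqP => [->|_]; [by rewrite mul_irr | exact: hmG].
  have hGK : is_minor G K by apply: sub_minor.
  have hK : the_class n m k K.
    split => //; first by move=> a b; rewrite /= /M; case: eqP.
    apply/eqP; rewrite eqn_leq; apply/andP; split; last by rewrite -{1}hsf class_up.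
    apply: leq_trans (spfloor_le (minor_refl K)) _.
    have v0 : 'I_(nv K) by exists 0; exact: nv_gt0.
    have := usp_ge (single_usp v0); rewrite /sp /= hn; lia.
  have heq := iso_sub_eq hle (hmax K hK hGK).
  left; split; first lia.
  move=> a b hab; by rewrite heq /M (negbTE hab).
- case: (spfloor_spec G) => H [hGH hsH]; rewrite hsf in hsH.
  case: (usp_attained H) => vs [ls [hu hsz]].
  case: vs hu hsz => [|x0 s0] hu hsz; first by case: hu => [[]].
  have hnvH : nv G <= nv H := minor_nv hGH.
  have hupH := usp_le H.
  have hnv' : nv H <= (size s0).+1 + k by move: hsH; rewrite /sp -hsz /=; lia.
  have hs1 : 1 <= size s0 by move: hsH hnvH hupH; rewrite /sp -hsz /= hn; lia.
  have hI := init_inv hu hs1 hnv'.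
  have hIG : Inv k G by apply: (chain_inv hGH) => //; rewrite hn.
  case: hIG => lam [p [c1 c2 c3 c4 [c5 c6]]].
  have hp2 : 2 <= p by move: c6; rewrite hn; lia.
  pose GC' := GC lam m.
  have hle : forall u w, @mul G u w <= mulC lam m u w.
    move=> u w; rewrite /mulC; case: eqP => [->|hne]; first by rewrite mul_irr.
    case: (posnP (mul u w)) => [->//|hpos].
    have hd := c1 _ _ hpos.
    case: ifP => [/andP[ou ow]|hodd].
      have hne' : lam u != lam w by apply/eqP => e; apply: hne; exact: c3.
      rewrite ifT; first exact: c2.
      case: (parity (lam u)) => [[a [ea _]]|[a [_ o]]]; last by rewrite o in ou.
      case: (parity (lam w)) => [[b [eb _]]|[b [_ o]]]; last by rewrite o in ow.
      move: hd hne'; rewrite ea eb /dist => hd hne'; apply/eqP; lia.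
    by rewrite hd; exact: hmG.
  have hGC : is_minor G GC' by apply: sub_minor.
  have husp : p <= usp GC'.
    by rewrite -(size_PP lam p); apply: usp_ge; exact: (PP_usp c3 c5 hp2 hm).
  have hk1 : k <= n - p.
    rewrite -hsf; apply: leq_trans (spfloor_le hGC) _; rewrite /sp /= hn; lia.
  have hC : the_class n m k GC'.
    split => //.
    + move=> a b; rewrite /= /mulC; case: ifP => // _; case: ifP => _; case: ifP => //; lia.
    + apply/eqP; rewrite eqn_leq; apply/andP; split; last by rewrite -{1}hsf class_up.
      apply: leq_trans (spfloor_le (minor_refl GC')) _; rewrite /sp /= hn; lia.
  have heq := iso_sub_eq hle (hmax GC' hC hGC).
  have hu2 : usp GC' = p.
    apply/eqP; rewrite eqn_leq husp andbT.
    have := spfloor_le (minor_refl GC'); case: hC => _ _ ->; rewrite /sp /= hn.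
    have := usp_le GC'; move: c6; rewrite /= hn; lia.
  have -> : n - k = p by move: c6 (usp_le GC') husp; rewrite /= hn; lia.
  rewrite (graph_eta (mulC_sym lam m) (mulC_irr lam m) heq).
  exact: (GC_sat c3 c4 c5 hp2 hm hu2).
Qed.
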